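(* Let $\alpha:[0,1]\to\mathrm{Mult}_n(\mathbb{C})$ be a path and let $\widetilde\alpha(0)\in\mathbb{C}^n$ satisfy $\mathrm{Mult}(\widetilde\alpha(0))=\alpha(0)$. If $\alpha$ has weakly decreasing shape, then there exist at most $n!$ paths $\widetilde\alpha:[0,1]\to\mathbb{C}^n$ starting at $\widetilde\alpha(0)$ with $\alpha=\mathrm{Mult}\circ\widetilde\alpha$.
   Context: $\mathrm{Mult}_n(\mathbb{C})=\mathbb{C}^n/\mathrm{Sym}_n$ is the space of $n$-element multisets in $\mathbb{C}$ and $\mathrm{Mult}$ the quotient map. The shape of a multiset is the integer partition of $n$ formed by its multiplicities; partitions are ordered by $\lambda\le\mu$ iff $\mu$ is obtained by summing blocks of a partition of the parts of $\lambda$. A path has weakly decreasing shape if $s\le t$ implies $\mathrm{Shape}(\alpha(s))\ge\mathrm{Shape}(\alpha(t))$. *)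

(* Defs.v *)
From HB Require Import structures.
From mathcomp Require Import all_boot all_order all_algebra.
From mathcomp Require Import all_classical all_reals all_analysis.
From mathcomp Require Import finmap multiset.
Set Implicit Arguments. Unset Strict Implicit. Unset Printing Implicit Defensive.
Import Order.TTheory GRing.Theory Num.Theory.
Import numFieldNormedType.Exports.
Local Open Scope classical_set_scope.
Local Open Scope ring_scope.
Open Scope mset_scope.
Local Open Scope classical_set_scope.
Local Open Scope ring_scope.

(* The complex plane C is modelled as R * R (product topology = Euclidean
   topology), for an arbitrary real field R : realType. *)
Definition CC (R : realType) : Type := (R * R)%type.

Notation Cn R n := {ptws 'I_n -> (R * R)%type}.

(* The quotient map Mult : C^n -> Mult_n(C) = C^n / Sym_n, realised as the
   multiset of the coordinates. *)
Definition Mult (R : realType) (n : nat) (x : Cn R n)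
  : {mset (R * R)%type} :=
  seq_mset [seq x i | i <- enum 'I_n].

Definition in_Mult (R : realType) (n : nat) (A : {mset (R * R)%type}) : Prop :=
  exists x : Cn R n, Mult x = A.

Definition I01 (R : realType) : set R := [set t : R | 0 <= t <= 1].

Arguments I01 R : clear implicits.

(* A path alpha : [0,1] -> Mult_n(C), where Mult_n(C) carries the quotient
   topology: U is open iff Mult^{-1}(U) is open in C^n.  Continuity of the
   restriction of alpha to [0,1] (subspace topology) is spelled out. *)
Definition Mult_path (R : realType) (n : nat) (alpha : R -> {mset (R * R)%type})
  : Prop :=
  (forall t, I01 R t -> in_Mult n (alpha t)) /\
  (forall U : set {mset (R * R)%type},
      open ((@Mult R n) @^-1` U : set (Cn R n)) ->
      exists V : set R, open V /\ I01 R `&` alpha @^-1` U = I01 R `&` V).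

(* Shape of a multiset: the list of multiplicities of its distinct elements
   (an integer partition, listed in some order). *)
Definition shape (T : choiceType) (A : {mset T}) : seq nat :=
  [seq A z | z <- finsupp A].

(* Partition order: l <= m iff m is obtained by summing the blocks of a
   partition of the parts of l (the blocks being the fibres of f). *)
Definition partition_le (l m : seq nat) : Prop :=
  exists f : 'I_(size l) -> 'I_(size m),
    forall j : 'I_(size m), nth 0%N m j = (\sum_(i | f i == j) nth 0%N l i)%N.

Definition weakly_decreasing_shape (R : realType) (alpha : R -> {mset (R * R)%type})
  : Prop :=
  forall s t, I01 R s -> I01 R t -> s <= t ->
    partition_le (shape (alpha t)) (shape (alpha s)).

Definition is_lift (R : realType) (n : nat) (alpha : R -> {mset (R * R)%type})
  (x0 : Cn R n) (f : R -> Cn R n) : Prop :=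
  {within I01 R, continuous f} /\ f 0 = x0 /\
  (forall t, I01 R t -> Mult (f t) = alpha t).

(* Main.v *)
Require Import Defs.
From HB Require Import structures.
From mathcomp Require Import all_boot all_order all_algebra all_fingroup.
From mathcomp Require Import all_classical all_reals all_analysis.
From mathcomp Require Import finmap multiset.
From mathcomp Require Import lra.
Import Order.TTheory GRing.Theory Num.Theory.
Import numFieldNormedType.Exports.
Local Open Scope classical_set_scope.
Local Open Scope ring_scope.
Open Scope mset_scope.
Local Open Scope classical_set_scope.
Local Open Scope ring_scope.
Set Implicit Arguments. Unset Strict Implicit.
Section Comb.
Variables (T : eqType) (n : nat).

Definition clsx (x : 'I_n -> T) (i : 'I_n) : {set 'I_n} := [set j | x j == x i].
Definition cls (x : 'I_n -> T) : {set {set 'I_n}} := [set clsx x i | i : 'I_n].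

Lemma clsx_eq x i j : (clsx x i == clsx x j) = (x i == x j).
Proof.
apply/eqP/eqP => [e|e].
  have : i \in clsx x i by rewrite inE.
  by rewrite e inE => /eqP.
by apply/setP => k; rewrite !inE e.
Qed.

Lemma size_undup_ker (I T1 T2 : eqType) (s : seq I) (f : I -> T1) (g : I -> T2) :
  (forall i j, (f i == f j) = (g i == g j)) ->
  size (undup (map f s)) = size (undup (map g s)).
Proof.
move=> H; elim: s => //= a s IH.
have -> : (f a \in map f s) = (g a \in map g s).
  by apply/mapP/mapP => -[j js /eqP e]; exists j => //; apply/eqP; rewrite -?H ?H in e *.
by case: ifP => _ //=; rewrite IH.
Qed.

Lemma card_cls x : #|cls x| = size (undup (map x (enum 'I_n))).
Proof.
rewrite (@size_undup_ker _ _ _ _ x (clsx x)); last by move=> i j; rewrite clsx_eq.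
have /card_uniqP <- := undup_uniq (map (clsx x) (enum 'I_n)).
apply: eq_card => S; rewrite mem_undup; apply/imsetP/mapP => -[i _ ->]; exists i => //.
by rewrite mem_enum.
Qed.

Lemma cls_lt (x y : 'I_n -> T) :
  (forall a b, x a = x b -> y a = y b) ->
  (exists a b, y a = y b /\ x a <> x b) -> (#|cls y| < #|cls x|)%N.
Proof.
move=> Hxy [a [b [ey nx]]].
pose h (S : {set 'I_n}) := (\bigcup_(j in S) clsx y j)%SET.
have hE i : h (clsx x i) = clsx y i.
  apply/setP => k; apply/bigcupP/idP => [[j]|kin].
    rewrite !inE => /eqP /Hxy e; by rewrite e.
  by exists i; rewrite // inE.
have -> : cls y = [set h S | S in cls x]%SET.
  apply/setP => S; apply/imsetP/imsetP => -[i iin ->].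
    by exists (clsx x i); [apply/imsetP; exists i|rewrite hE].
  by case/imsetP: iin => j _ ->; exists j => //; rewrite hE.
rewrite ltn_neqAle leq_imset_card andbT; apply/imset_injP => inj.
have : clsx x a = clsx x b.
  by apply: inj; [apply/imsetP; exists a|apply/imsetP; exists b|rewrite !hE; apply/eqP; rewrite clsx_eq ey].
by move/eqP; rewrite clsx_eq => /eqP.
Qed.

End Comb.

Lemma partition_le_size l m : all (fun k => 0 < k)%N m -> partition_le l m -> (size m <= size l)%N.
Proof.
move=> /allP pos [f Hf].
have surj j : exists i, f i == j.
  apply/existsP; apply: contraT; rewrite negb_exists => /forallP H.
  have := Hf j; rewrite big_pred0; last by move=> i; apply/negbTE/H.
  have : (0 < nth 0%N m j)%N by apply: pos; apply: mem_nth.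
  by move=> /[swap] ->.
have -> : size m = #|'I_(size m)| by rewrite card_ord.
have -> : size l = #|'I_(size l)| by rewrite card_ord.
have -> : #|'I_(size m)| = #|[set f i | i in 'I_(size l)]%SET|.
  apply: eq_card => j; apply/esym; apply/imsetP; have [i /eqP <-] := surj j.
  by exists i.
exact: leq_imset_card.
Qed.

Lemma shape_pos (T : choiceType) (A : {mset T}) : all (fun k => 0 < k)%N (Defs.shape A).
Proof. by apply/allP => k /mapP [z zin ->]; rewrite mset_gt0 -msuppE. Qed.

Lemma size_shape_Mult (R : realType) n (x : Cn R n) :
  size (Defs.shape (Mult x)) = #|cls x|.
Proof.
rewrite card_cls size_map.
have P : perm_eq (finsupp (Mult x)) (undup (map x (enum 'I_n))).
  apply: uniq_perm; [exact: fset_uniq|exact: undup_uniq|].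
  move=> z; rewrite mem_undup msuppE /Mult.
  exact: (perm_mem (perm_eq_seq_mset _)).
by rewrite (perm_size P).
Qed.

Section Topo.
Variable R : realType.

Lemma sep_near (F : set_system R) (FF : Filter F) (p q : R -> (R * R)%type) (y z : (R * R)%type) :
  y != z -> p @ F --> y -> q @ F --> z -> \forall t \near F, p t != q t.
Proof.
move=> yz py qz; apply: contrapT => H; move/eqP: yz; apply.
apply: (@norm_hausdorff R (R * R)%type) => A B nA nB.
have nP := py A nA; have nQ := qz B nB.
have [t [[pA qB] e]] : exists t, (A (p t) /\ B (q t)) /\ p t = q t.
  apply: contrapT => nE; apply: H; near=> t.
  have pA : A (p t) by near: t; exact: nP.
  have qB : B (q t) by near: t; exact: nQ.
  by apply/eqP => e; apply: nE; exists t.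
by exists (p t); split => //; rewrite e.
Unshelve. all: by end_near.
Qed.

Lemma coord_cvg n (g : R -> Cn R n) : {within I01 R, continuous g} ->
  forall u, I01 R u -> forall i, (fun t => g t i) @ within (I01 R) (nbhs u) --> g u i.
Proof.
move=> cg u Iu i.
have h := (subspace_continuousP (I01 R) g).1 cg u Iu.
exact: (cvg_comp _ _ h (@proj_continuous _ (fun _ : 'I_n => (R * R)%type) i (g u))).
Qed.

Lemma near_sep n (g h : R -> Cn R n) : {within I01 R, continuous g} ->
  {within I01 R, continuous h} -> forall u, I01 R u ->
  \forall t \near within (I01 R) (nbhs u), forall a b, g u a != h u b -> g t a != h t b.
Proof.
move=> cg ch u Iu.
apply: filter_forall => a; apply: filter_forall => b.
have [e|ne] := eqVneq (g u a) (h u b).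
  by apply: nearW.
have := sep_near _ ne (coord_cvg cg Iu (i:=a)) (coord_cvg ch Iu (i:=b)).
move=> S; near=> t => _; near: t; exact: S.
Unshelve. all: by end_near.
Qed.

Lemma near_delta (P : R -> Prop) u :
  (\forall t \near within (I01 R) (nbhs u), P t) ->
  exists2 d : R, 0 < d & forall t, I01 R t -> `|u - t| < d -> P t.
Proof.
move=> /nbhs_ballP [d d0 H]; exists d => // t It ut.
by apply: H => //; rewrite /ball /=.
Qed.


Lemma RI (a0 b : R) (P : R -> Prop) : a0 <= b -> P b ->
 (forall s, a0 <= s -> s < b -> (forall r, s < r -> r <= b -> P r) -> P s) ->
 (forall s, a0 < s -> s <= b -> P s ->
    exists2 d : R, 0 < d & forall r, a0 <= r -> s - d < r -> r < s -> P r) ->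
 forall s, a0 <= s -> s <= b -> P s.
Proof.
move=> ab Pb Pc Pl s0 as0 s0b; apply: contrapT => nP0.
pose S := [set r | s0 <= r /\ r <= b /\ ~ P r].
have S0 : S s0 by [].
have ubS : ubound S b by move=> r [_ []].
have hS : has_sup S by split; [exists s0 | exists b].
have s0m : s0 <= sup S := sup_upper_bound hS S0.
have mb : sup S <= b := ge_sup (ex_intro _ s0 S0) ubS.
have [Pm | nPm] := pselect (P (sup S)).
  have s0m' : s0 < sup S.
    rewrite lt_neqAle s0m andbT; apply/eqP => e; apply: nP0; by rewrite e.
  have [d d0 Hd] := Pl _ (le_lt_trans as0 s0m') mb Pm.
  have [e Se me] := sup_adherent d0 hS.
  have em : e <= sup S := sup_upper_bound hS Se.
  case: Se => [s0e [eb nPe]].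
  have [em'|nem] := eqVneq e (sup S); first by apply: nPe; rewrite em'.
  apply: nPe; apply: Hd => //; first exact: le_trans as0 s0e.
  by rewrite lt_neqAle nem em.
have mb' : sup S < b.
  rewrite lt_neqAle mb andbT; apply/eqP => e; apply: nPm; by rewrite e.
apply: nPm; apply: Pc => //; first exact: le_trans as0 s0m.
move=> r mr rb; apply: contrapT => nPr.
have : r <= sup S by apply: (sup_upper_bound hS); split; [apply: le_trans s0m (ltW mr)|].
by rewrite leNgt mr.
Qed.

Variable n : nat.

Definition mono_cls (g : R -> Cn R n) := forall s t, I01 R s -> I01 R t -> s <= t ->
  (#|cls (g s)| <= #|cls (g t)|)%N.

Lemma I01P t : I01 R t <-> 0 <= t /\ t <= 1.
Proof. by rewrite /I01 /=; split => [/andP//|[-> ->]]. Qed.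

Lemma B_global (g : R -> Cn R n) : {within I01 R, continuous g} -> mono_cls g ->
  forall u a b, I01 R u -> g u a = g u b -> forall t, 0 <= t -> t <= u -> g t a = g t b.
Proof.
move=> cg mg u a b Iu eu.
have [u0 u1] := (I01P u).1 Iu.
apply: (RI (P := fun t => g t a = g t b)) => //.
  move=> s s0 su Hr; apply: contrapT => /eqP ne.
  have Is : I01 R s by apply/I01P; split => //; apply: ltW (lt_le_trans su u1).
  have [d d0 Hd] := near_delta (near_sep cg cg Is).
  pose r := Num.min (s + d / 2) u.
  have sr : s < r by rewrite lt_min su andbT; lra.
  have ru : r <= u by rewrite ge_min lexx orbT.
  have rd : r <= s + d / 2 by rewrite ge_min lexx.
  have Ir : I01 R r by apply/I01P; split; [apply: le_trans s0 (ltW sr)|apply: le_trans ru u1].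
  have sd : `|s - r| < d by rewrite ler0_norm ?subr_le0 ?(ltW sr) //; lra.
  by move: (Hd r Ir sd a b ne); rewrite (Hr r sr ru) eqxx.
move=> s s0 su Ps.
have Is : I01 R s by apply/I01P; split; [apply: ltW|apply: le_trans su u1].
have [d d0 Hd] := near_delta (near_sep cg cg Is).
exists d => // r r0 sdr rs; apply: contrapT => ne.
have Ir : I01 R r by apply/I01P; split => //; apply: ltW (lt_le_trans rs (le_trans su u1)).
have sd : `|s - r| < d by rewrite ger0_norm ?subr_ge0 ?(ltW rs) //; lra.
have lt : (#|cls (g s)| < #|cls (g r)|)%N.
  apply: cls_lt; last by exists a, b.
  move=> a' b' e; apply/eqP; case: eqP => // /eqP nx.
  by move: (Hd r Ir sd a' b' nx); rewrite e eqxx.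
by move: (mg r s Ir Is (ltW rs)); rewrite leqNgt lt.
Qed.

Lemma mem_Mult (x : Cn R n) z : (z \in Mult x) = (z \in [seq x i | i <- enum 'I_n]).
Proof. exact: (perm_mem (perm_eq_seq_mset _)). Qed.

Lemma A_uniq (g h : R -> Cn R n) : {within I01 R, continuous g} ->
  {within I01 R, continuous h} -> mono_cls g -> mono_cls h ->
  (forall t, I01 R t -> Mult (g t) = Mult (h t)) -> g 1 = h 1 ->
  forall t, I01 R t -> g t = h t.
Proof.
move=> cg ch mg mh Mgh g1 t It.
have [t0 t1] := (I01P t).1 It.
apply: (RI (P := fun t => g t = h t)) (t0) (t1) => //.
  move=> s s0 su Hr; apply: contrapT => ne.
  have [a na] : exists a, g s a != h s a.
    apply: contrapT => H; apply: ne; apply: funext => a; apply/eqP.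
    by apply: contrapT => /negP nq; apply: H; exists a.
  have Is : I01 R s by apply/I01P; split => //; apply: ltW.
  have [d d0 Hd] := near_delta (near_sep cg ch Is).
  pose r := Num.min (s + d / 2) 1.
  have sr : s < r by rewrite lt_min su andbT; lra.
  have ru : r <= 1 by rewrite ge_min lexx orbT.
  have rd : r <= s + d / 2 by rewrite ge_min lexx.
  have Ir : I01 R r by apply/I01P; split; [apply: le_trans s0 (ltW sr)|].
  have sd : `|s - r| < d by rewrite ler0_norm ?subr_le0 ?(ltW sr) //; lra.
  by move: (Hd r Ir sd a a na); rewrite (Hr r sr ru) eqxx.
move=> s s0 su Ps.
have Is : I01 R s by apply/I01P; split; [apply: ltW|].
have [d d0 Hd] := near_delta (near_sep cg ch Is).
exists d => // r r0 sdr rs.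
have Ir : I01 R r by apply/I01P; split => //; apply: ltW (lt_le_trans rs su).
have sd : `|s - r| < d by rewrite ger0_norm ?subr_ge0 ?(ltW rs) //; lra.
apply: funext => i.
have : g r i \in Mult (h r).
  by rewrite -Mgh // mem_Mult; apply: map_f; rewrite mem_enum.
rewrite mem_Mult => /mapP [m _ e].
have e2 : g s i = h s m.
  apply/eqP; case: eqP => // /eqP nx.
  by move: (Hd r Ir sd i m nx); rewrite e eqxx.
have hm : h r i = h r m.
  apply: (B_global ch mh Is _ r0 (ltW rs)).
  by rewrite -e2 Ps.
by rewrite e hm.
Qed.
End Topo.

Theorem corollary8p4 (R : realType) (n : nat)
  (alpha : R -> {mset (R * R)%type}) (x0 : Cn R n) :
  Mult_path n alpha ->
  Mult x0 = alpha 0 ->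
  weakly_decreasing_shape alpha ->
  forall (k : nat) (f : 'I_k -> R -> Cn R n),
    (forall i, is_lift alpha x0 (f i)) ->
    (forall i j, i != j -> exists t, I01 R t /\ f i t <> f j t) ->
    (k <= n`!)%N.
Proof.
move=> _ _ wds k f Hl Hd.
have cont i : {within I01 R, continuous f i} := (Hl i).1.
have mult i t : I01 R t -> Mult (f i t) = alpha t := (Hl i).2.2 t.
have mono i : mono_cls (f i).
  move=> s t Is It st; rewrite -!size_shape_Mult !mult //.
  exact: partition_le_size (shape_pos _) (wds s t Is It st).
case: k f Hl Hd cont mult mono => [|k] f Hl Hd cont mult mono; first by [].
pose y := f ord0 1.
have I1 : I01 R 1 by apply/I01P; split; [exact: ler01|exact: lexx].
have ex i : exists p : 'S_n, [forall j, f i 1 j == y (p j)].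
  have : perm_eq [seq f i 1 j | j <- enum 'I_n] [tuple y j | j < n].
    have -> : tval [tuple y j | j < n] = [seq y j | j <- enum 'I_n].
      by [].
    apply/eq_seq_msetP.
    by have := mult i 1 I1; rewrite -(mult ord0 1 I1).
  case/tuple_permP => p e; exists p; apply/forallP => j.
  have := congr1 (fun s => nth (0, 0) s j) e.
  rewrite /= (nth_map j) ?size_enum_ord // nth_ord_enum.
  rewrite (nth_map j) ?size_enum_ord // nth_ord_enum tnth_mktuple.
  by move=> ->.
pose sig i := odflt 1%g [pick p : 'S_n | [forall j, f i 1 j == y (p j)]].
have sigP i j : f i 1 j = y (sig i j).
  rewrite /sig; case: pickP => [p /forallP H | H]; first exact/eqP/H.
  by have [p Hp] := ex i; move: (H p); rewrite Hp.
have inj : injective sig.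
  move=> i j e; apply/eqP; apply: contraT => nij.
  have [t [It ne]] := Hd i j nij; exfalso; apply: ne.
  apply: (A_uniq (cont i) (cont j) (mono i) (mono j)) => //.
    by move=> s Is; rewrite !mult.
  by apply: funext => c; rewrite !sigP e.
by have := leq_card sig inj; rewrite card_ord card_Sn.
Qed.
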